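(* The hypotheses $\delta(G)\ge 2$ and $g(G)\ge 5$ in the statement ''$\chi_{\mu_2}(G\circ H)\le \chi_{\mu_2}(G)$ for all graphs $H$'' cannot be weakened to $\delta(G)\ge s$, $g(G)\ge t$ with $s<2$ or $t<5$. Specifically: (i) there exist a graph $G$ with $\delta(G)\ge 2$ and $g(G)=4$ and a graph $H$ with $\chi_{\mu_2}(G\circ H)>\chi_{\mu_2}(G)$; (ii) there exist a graph $G$ with $\delta(G)\ge 2$ and $g(G)=3$ and a graph $H$ with $\chi_{\mu_2}(G\circ H)>\chi_{\mu_2}(G)$; (iii) there exist a tree $T$ (so $\delta(T)=1$ and $g(T)=\infty$) and a graph $H$ with $\chi_{\mu_2}(T\circ H)>\chi_{\mu_2}(T)$.
   Context: The lexicographic product $G\circ H$ has vertex set $V(G)\times V(H)$, with $(g,h)$ adjacent to $(g',h')$ iff $gg'\in E(G)$, or $g=g'$ and $hh'\in E(H)$. The girth is the length of a shortest cycle, infinite for forests; $\delta(G)$ is the minimum degree. A set $M\subseteq V(X)$ is a $2$-distance mutual-visibility set if for every two vertices $u,v\in M$ there exists a shortest $u,v$-path of length at most $2$ none of whose internal vertices lies in $M$. $\chi_{\mu_2}(X)$ is the minimum cardinality of a partition of $V(X)$ into $2$-distance mutual-visibility sets. *)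

(* Defs.v *)
From mathcomp Require Import all_boot.
Set Implicit Arguments. Unset Strict Implicit. Unset Printing Implicit Defensive.

Record sgraph := SGraph {
  vert :> finType;
  adj : rel vert;
  adj_sym : symmetric adj;
  adj_irr : irreflexive adj }.

Definition lex_adj (G H : sgraph) : rel (vert G * vert H)%type :=
  fun x y => adj x.1 y.1 || ((x.1 == y.1) && adj x.2 y.2).

Lemma lex_adj_sym G H : symmetric (@lex_adj G H).
Proof.
move=> [a b] [c d]; rewrite /lex_adj /= adj_sym [adj b d]adj_sym.
by rewrite [c == a]eq_sym.
Qed.

Lemma lex_adj_irr G H : irreflexive (@lex_adj G H).
Proof. by move=> [a b]; rewrite /lex_adj /= !adj_irr eqxx. Qed.

Definition lexprod (G H : sgraph) : sgraph :=
  SGraph (@lex_adj_sym G H) (@lex_adj_irr G H).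

Definition mindeg_ge (G : sgraph) (s : nat) : Prop :=
  forall v : G, s <= #|[set w : G | adj v w]|.

Definition has_cycle_len (G : sgraph) (k : nat) : Prop :=
  exists s : seq G, [/\ size s = k, 3 <= k, uniq s & cycle (@adj G) s].

Definition girth_is (G : sgraph) (n : nat) : Prop :=
  has_cycle_len G n /\ forall m, m < n -> ~ has_cycle_len G m.

Definition connected (G : sgraph) : Prop :=
  forall x y : G, connect (@adj G) x y.

Definition is_tree (G : sgraph) : Prop :=
  0 < #|G| /\ connected G /\ forall k, ~ has_cycle_len G k.

(* For distinct u, v in M, a shortest
   u,v-path of length <= 2 with no internal vertex in M is either the edge uv
   (when u ~ v), or a path u - w - v with w not in M (then u, v non-adjacent,
   so d(u,v) = 2 and such a path is shortest). *)
Definition mv2 (G : sgraph) (M : {set G}) : bool :=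
  [forall u in M, forall v in M, (u != v) ==>
     (adj u v || [exists w, [&& adj u w, adj w v & w \notin M]])].

(* V(G) can be partitioned into (at most) k 2-distance mutual-visibility sets
   (colour classes of f; empty classes are allowed, which does not change the
   minimum). *)
Definition mv2_colorable (G : sgraph) (k : nat) : bool :=
  [exists f : {ffun G -> 'I_k}, [forall i : 'I_k, mv2 [set x | f x == i]]].

Lemma mv2_colorable_ex (G : sgraph) : exists k, mv2_colorable G k.
Proof.
exists #|G|; apply/existsP; exists [ffun x => enum_rank x].
apply/forallP => i; apply/forallP => u; apply/implyP; rewrite inE ffunE.
move=> /eqP hu; apply/forallP => v; apply/implyP; rewrite inE ffunE => /eqP hv.
apply/implyP => /eqP []; apply: enum_rank_inj; by rewrite hu hv.
Qed.

Definition chi_mu2 (G : sgraph) : nat := ex_minn (mv2_colorable_ex G).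

(* Main.v *)
Require Import Defs.
From mathcomp Require Import all_boot.
Set Implicit Arguments. Unset Strict Implicit. Unset Printing Implicit Defensive.

Section Search.
Variables (a : nat -> nat -> bool) (n k : nat).

Definition viol (i : nat) (col : seq nat) (u v : nat) : bool :=
  [&& nth 0 col u == nth 0 col v, ~~ a u v &
      all (fun w => (a u w && a w v) ==> ((w < i) && (nth 0 col w == nth 0 col u)))
          (iota 0 n)].

Definition bad (col : seq nat) : bool :=
  let i := size col in
  has (fun u => has (fun v => (u < v) && viol i col u v) (iota 0 i)) (iota 0 i).

Definition badi (col : seq nat) : bool :=
  let i := size col in
  let x := i.-1 in
  let N := [seq u <- iota 0 i | a x u] in
  has (fun u => viol i col u x) (iota 0 x) ||
  has (fun u => has (fun v => (u < v) && viol i col u v) N) N.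

Lemma badi_bad col : badi col -> bad col.
Proof.
rewrite /badi /bad; set i := size col.
case/orP.
  case/hasP => u; rewrite mem_iota /= => hu hv.
  have hi : 0 < i by case: (i) hu.
  apply/hasP; exists u; first by rewrite mem_iota /= (leq_trans hu) // leq_pred.
  apply/hasP; exists i.-1; first by rewrite mem_iota /= prednK.
  by rewrite hu.
case/hasP => u; rewrite mem_filter mem_iota /= => /andP [_ hu] /hasP [v].
rewrite mem_filter mem_iota /= => /andP [_ hv] h.
by apply/hasP; exists u; rewrite ?mem_iota //; apply/hasP; exists v; rewrite ?mem_iota.
Qed.

Fixpoint search (fuel : nat) (pre : seq nat) : bool :=
  if badi pre then false else
  if fuel is f.+1 then has (fun c => search f (rcons pre c)) (iota 0 k) else true.

Lemma bad_take col j : j <= size col -> bad (take j col) -> bad col.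
Proof.
move=> hj; rewrite /bad size_take_min (minn_idPl hj).
case/hasP => u; rewrite mem_iota /= => hu /hasP [v]; rewrite mem_iota /= => hv.
case/andP => huv /and3P [hc hna /allP hall].
apply/hasP; exists u; first by rewrite mem_iota /=; apply: leq_trans hu hj.
apply/hasP; exists v; first by rewrite mem_iota /=; apply: leq_trans hv hj.
rewrite huv /viol; rewrite !nth_take // in hc *; rewrite hc hna /=.
apply/allP => w hw; apply/implyP => hw2.
move: (hall w hw); rewrite hw2 /= => /andP [hwj]; rewrite !nth_take // => ->.
by rewrite (leq_trans hwj hj).
Qed.

Lemma search_complete col : all (fun c => c < k) col -> ~~ bad col ->
  forall d j, j + d = size col -> search d (take j col).
Proof.
move=> hall hnb d; elim: d => [|d IH] j hj.
  rewrite addn0 in hj; rewrite hj take_size /=.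
  by case: (boolP (badi col)) => // /badi_bad; rewrite (negbTE hnb).
have hjs : j < size col by rewrite -hj addnS ltnS leq_addr.
rewrite /=; have -> : badi (take j col) = false.
  by apply/negP => /badi_bad /(bad_take (ltnW hjs)); apply/negP.
apply/hasP; exists (nth 0 col j).
  by rewrite mem_iota /=; apply: (allP hall); apply: mem_nth.
rewrite -take_nth //; apply: IH; by rewrite addSnnS.
Qed.

Lemma search_false col : search (size col) [::] = false ->
  all (fun c => c < k) col -> bad col.
Proof.
move=> hs hall; apply/negPn/negP => hnb.
have := @search_complete col hall hnb (size col) 0; rewrite add0n take0 hs.
by move/(_ erefl).
Qed.
End Search.

Lemma not_colorable (X : sgraph) (x0 : X) k n (a : nat -> nat -> bool) (e : seq X) :
  n = size e -> uniq e -> (forall x, x \in e) ->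
  all (fun i => all (fun j => a i j == adj (nth x0 e i) (nth x0 e j))
     (iota 0 n)) (iota 0 n) ->
  search a n k n [::] = false -> ~~ mv2_colorable X k.
Proof.
move=> hn he hall' hA hs; apply/negP => /existsP [f /forallP hf].
have hse : size e = n by [].
pose col := [seq val (f x) | x <- e].
have hsc : size col = n by rewrite size_map.
have hcol : forall i, i < n -> nth 0 col i = val (f (nth x0 e i)).
  by move=> i hi; rewrite (nth_map x0) // hse.
have ha : forall i j, i < n -> j < n -> a i j = adj (nth x0 e i) (nth x0 e j).
  move=> i j hi hj; move/allP: hA => /(_ i); rewrite mem_iota /= => /(_ hi).
  by move/allP => /(_ j); rewrite mem_iota /= => /(_ hj) /eqP.
have hbad := search_false (col := col) (k := k) (a := a) (n := n).
rewrite hsc in hbad; move: (hbad hs); clear hbad.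
have -> : all (fun c => c < k) col.
  by apply/allP => c /mapP [x _ ->]; apply: ltn_ord.
move=> /(_ isT); rewrite /bad hsc.
case/hasP => u; rewrite mem_iota /= => hu /hasP [v]; rewrite mem_iota /= => hv.
case/andP => huv /and3P [hc hna /allP hall].
set xu := nth x0 e u; set xv := nth x0 e v.
have := hf (f xu) => /forallP /(_ xu) /implyP; rewrite inE eqxx => /(_ isT).
move=> /forallP /(_ xv) /implyP.
have hfv : f xv == f xu by rewrite -(inj_eq val_inj) -!hcol // eq_sym.
rewrite inE hfv => /(_ isT) /implyP.
have hneq : xu != xv.
  rewrite nth_uniq ?hse //; by rewrite neq_ltn huv.
move=> /(_ hneq); rewrite -ha // (negbTE hna) /=.
case/existsP => w' /and3P [h1 h2 hw']; rewrite inE in hw'.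
have hw'e : w' \in e by [].
set w := index w' e.
have hw : w < n by rewrite -hse index_mem.
have hnw : nth x0 e w = w' by rewrite nth_index.
move: (hall w); rewrite mem_iota /= hw => /(_ isT).
rewrite !ha // hnw h1 h2 /=; rewrite !hcol // hnw.
by rewrite (inj_eq val_inj) (negbTE hw').
Qed.

Lemma colorable_mono (X : sgraph) k k' : mv2_colorable X k -> k <= k' ->
  mv2_colorable X k'.
Proof.
move=> /existsP [f /forallP hf] hk; apply/existsP.
exists [ffun x => widen_ord hk (f x)]; apply/forallP => i.
case: (ltnP i k) => hi.
  have -> : [set x | [ffun x => widen_ord hk (f x)] x == i] =
            [set x | f x == Ordinal hi].
    apply/setP => x; rewrite !inE ffunE -!(inj_eq val_inj) //.
  exact: hf.
apply/forallP => u; apply/implyP; rewrite inE ffunE => /eqP hu.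
by move: (ltn_ord (f u)); rewrite -[val (f u)]/(val (widen_ord hk (f u))) hu ltnNge hi.
Qed.

Lemma chi_le (X : sgraph) k : mv2_colorable X k -> chi_mu2 X <= k.
Proof. by rewrite /chi_mu2; case: ex_minnP => m _ H; apply: H. Qed.

Lemma chi_gt (X : sgraph) k : ~~ mv2_colorable X k -> k < chi_mu2 X.
Proof.
rewrite /chi_mu2; case: ex_minnP => m Hm _ hn; rewrite ltnNge; apply/negP => hle.
by move: (colorable_mono Hm hle); apply/negP.
Qed.

Definition full (T : eqType) (s : seq T) := forall x, x \in s.
Lemma forallE (T : finType) (s : seq T) (P : pred T) : full s -> [forall x, P x] = all P s.
Proof.
move=> hs; apply/forallP/allP => h x; first by move=> _; apply: h.
by apply: h; rewrite hs.
Qed.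
Lemma existsE (T : finType) (s : seq T) (P : pred T) : full s -> [exists x, P x] = has P s.
Proof.
move=> hs; apply/existsP/hasP => [[x hx]|[x _ hx]]; last by exists x.
by exists x; rewrite ?hs.
Qed.
Lemma allTP (T : eqType) (s : seq T) (P : pred T) : full s -> all P s -> forall x, P x.
Proof. by move=> hs /allP h x; apply: h; rewrite hs. Qed.

Definition mv2' (G : sgraph) (s : seq G) (P : pred G) : bool :=
  all (fun u => P u ==> all (fun v => P v ==> ((u != v) ==>
     (adj u v || has (fun w => [&& adj u w, adj w v & ~~ P w]) s))) s) s.

Lemma mv2E (G : sgraph) (s : seq G) (P : pred G) : full s -> mv2 [set x | P x] = mv2' s P.
Proof.
move=> hs; rewrite /mv2 /mv2' (forallE _ hs); apply: eq_all => u /=; rewrite inE; congr (_ ==> _).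
rewrite (forallE _ hs); apply: eq_all => v /=; rewrite inE; congr (_ ==> (_ ==> (_ || _))).
by rewrite (existsE _ hs); apply: eq_has => w /=; rewrite inE.
Qed.

Lemma colorable_of (G : sgraph) (s : seq G) k (f : G -> nat) : full s ->
  all (fun x => f x < k.+1) s -> all (fun i => mv2' s (fun x => f x == i)) (iota 0 k.+1) ->
  mv2_colorable G k.+1.
Proof.
move=> hs /(allTP hs) hk /allP ha; apply/existsP; exists [ffun x => inord (f x)].
apply/forallP => i.
have -> : [set x | [ffun x => inord (f x)] x == i] = [set x | f x == i].
  by apply/setP => x; rewrite !inE ffunE -(inj_eq val_inj) /= inordK.
rewrite (mv2E _ hs); apply: ha; rewrite mem_iota /=; exact: ltn_ord.
Qed.

Lemma mindeg2_of (G : sgraph) (s : seq G) : full s ->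
  all (fun v => has (fun w1 => has (fun w2 => [&& w1 != w2, adj v w1 & adj v w2])
     s) s) s ->
  mindeg_ge G 2.
Proof.
move=> hs /(allTP hs) h v; case/hasP: (h v) => w1 _ /hasP [w2 _ /and3P [hne h1 h2]].
have := cards2 w1 w2; rewrite hne => <-; apply: subset_leq_card.
by apply/subsetP => x; rewrite !inE => /orP [] /eqP ->.
Qed.

Lemma no_tri (G : sgraph) (U : seq G) : full U ->
  all (fun a => all (fun b => all (fun c => ~~ [&& adj a b, adj b c & adj c a])
     U) U) U ->
  ~ has_cycle_len G 3.
Proof.
move=> hU /(allTP hU) h [s [hs _ _ hc]].
case: s hs hc => [|a [|b [|c [|d s]]]] //= _; rewrite andbT => hc.
by move: (h a) => /(allTP hU) /(_ b) /(allTP hU) /(_ c); rewrite hc.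
Qed.

Definition mk_table (X : sgraph) (x0 : X) (e : seq X) : seq (seq bool) :=
  [seq [seq adj (nth x0 e i) (nth x0 e j) | j <- iota 0 (size e)] | i <- iota 0 (size e)].
Definition tab (T : seq (seq bool)) (i j : nat) := nth false (nth [::] T i) j.

Definition bit (t : seq nat) (i j : nat) : bool := odd (nth 0 t i %/ 2 ^ j).
Definition idx3 (x : bool * bool * bool) : nat := 4 * x.1.1 + 2 * x.1.2 + x.2.
Definition vG (k : nat) : bool * bool * bool := (odd (k %/ 4), odd (k %/ 2), odd k).
Definition t8 := [:: 192; 48; 112; 192; 6; 6; 13; 9].
Definition adj8 (x y : bool * bool * bool) : bool :=
  (x != y) && (bit t8 (idx3 x) (idx3 y) || bit t8 (idx3 y) (idx3 x)).
Lemma adj8_sym : symmetric adj8.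
Proof. by move=> i j; rewrite /adj8 eq_sym orbC. Qed.
Lemma adj8_irr : irreflexive adj8.
Proof. by move=> i; rewrite /adj8 eqxx. Qed.
Definition G8 := SGraph adj8_sym adj8_irr.

Definition nadj (T : finType) (x y : T) := false.
Lemma nadj_sym T : symmetric (@nadj T). Proof. by []. Qed.
Lemma nadj_irr T : irreflexive (@nadj T). Proof. by []. Qed.
Definition E2 := SGraph (@nadj_sym bool) (@nadj_irr bool).

Definition kadj (T : finType) (x y : T) := x != y.
Lemma kadj_sym T : symmetric (@kadj T). Proof. by move=> x y; rewrite /kadj eq_sym. Qed.
Lemma kadj_irr T : irreflexive (@kadj T). Proof. by move=> x; rewrite /kadj eqxx. Qed.
Definition K3 := SGraph (@kadj_sym (option bool)) (@kadj_irr (option bool)).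
Definition K2 := SGraph (@kadj_sym bool) (@kadj_irr bool).

Definition Ub : seq bool := [:: true; false].
Lemma Ub_full : full Ub. Proof. by case. Qed.
Definition U3 : seq (bool * bool * bool) := [seq (x, c) | x <- [seq (a, b) | a <- Ub, b <- Ub], c <- Ub].
Lemma U3_full : full U3. Proof. by case=> [[[] []] []]. Qed.
Definition U16 : seq (bool * bool * bool * bool) := [seq (x, c) | x <- U3, c <- Ub].
Lemma U16_full : full U16. Proof. by case=> [[[[] []] []] []]. Qed.

Definition P8 : seq nat := [:: 9; 1; 10; 8; 2; 14; 15; 4; 0; 11; 6; 7; 13; 5; 12; 3].
Definition L8 := lexprod G8 E2.
Definition e8 : seq (vert L8) := [seq (vG (p %/ 2), odd p) | p <- P8].
Definition x8 : vert L8 := (vG 0, false).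
Definition T8 := Eval vm_compute in mk_table x8 e8.

Lemma s8 : search (tab T8) 16 3 16 [::] = false.
Proof. by vm_compute. Qed.

Lemma L8_not3 : ~~ mv2_colorable L8 3.
Proof.
apply: (@not_colorable L8 x8 3 16 (tab T8) e8).
- by [].
- by vm_compute.
- by apply: (@allTP _ U16 (fun x => x \in e8) U16_full); vm_compute.
- by vm_compute.
- exact: s8.
Qed.

Lemma G8_col3 : mv2_colorable G8 3.
Proof.
apply: (@colorable_of G8 U3 2 (fun x => nth 0 [:: 0; 1; 0; 0; 1; 1; 2; 2] (idx3 x)) U3_full).
- by vm_compute.
- by vm_compute.
Qed.

Lemma part1 : exists (G H : sgraph), [/\ mindeg_ge G 2, girth_is G 4 &
      chi_mu2 G < chi_mu2 (lexprod G H)].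
Proof.
exists G8, E2; split.
- by apply: (@mindeg2_of G8 U3 U3_full); vm_compute.
- split.
    exists [:: vG 1; vG 4; vG 2; vG 5]; split => //; by vm_compute.
  move=> m hm [s [hs h3 hu hc]].
  have hm3 : m = 3 by apply/eqP; rewrite eqn_leq -ltnS hm h3.
  subst m; apply: (@no_tri G8 U3 U3_full); last by exists s.
  by vm_compute.
- apply: leq_ltn_trans (chi_le G8_col3) (chi_gt L8_not3).
Qed.

Definition Uo : seq (option bool) := [:: None; Some true; Some false].
Lemma Uo_full : full Uo. Proof. by case=> [[]|]. Qed.
Definition L3 := lexprod K3 E2.
Definition U6 : seq (vert L3) := [seq (x, c) | x <- Uo, c <- Ub].
Lemma U6_full : full U6. Proof. by case=> [[[]|] []]. Qed.
Definition x3 : vert L3 := (None, true).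
Definition T3 := Eval vm_compute in mk_table x3 U6.

Lemma L3_not1 : ~~ mv2_colorable L3 1.
Proof.
apply: (@not_colorable L3 x3 1 6 (tab T3) U6).
- by [].
- by vm_compute.
- exact: U6_full.
- by vm_compute.
- by vm_compute.
Qed.

Lemma K3_col1 : mv2_colorable K3 1.
Proof.
apply: (@colorable_of K3 Uo 0 (fun x => 0) Uo_full).
- by vm_compute.
- by vm_compute.
Qed.

Lemma part2 : exists (G H : sgraph), [/\ mindeg_ge G 2, girth_is G 3 &
      chi_mu2 G < chi_mu2 (lexprod G H)].
Proof.
exists K3, E2; split.
- by apply: (@mindeg2_of K3 Uo Uo_full); vm_compute.
- split.
    exists [:: None; Some true; Some false]; split => //; by vm_compute.
  move=> m hm [s [hs h3 hu hc]].
  by move: (leq_ltn_trans h3 hm); rewrite ltnn.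
- apply: leq_ltn_trans (chi_le K3_col1) (chi_gt L3_not1).
Qed.

Definition L2 := lexprod K2 E2.
Definition U4 : seq (vert L2) := [seq (x, c) | x <- Ub, c <- Ub].
Lemma U4_full : full U4. Proof. by case=> [[] []]. Qed.
Definition x2 : vert L2 := (true, true).
Definition T2 := Eval vm_compute in mk_table x2 U4.

Lemma L2_not1 : ~~ mv2_colorable L2 1.
Proof.
apply: (@not_colorable L2 x2 1 4 (tab T2) U4).
- by [].
- by vm_compute.
- exact: U4_full.
- by vm_compute.
- by vm_compute.
Qed.

Lemma K2_col1 : mv2_colorable K2 1.
Proof.
apply: (@colorable_of K2 Ub 0 (fun x => 0) Ub_full).
- by vm_compute.
- by vm_compute.
Qed.

Lemma part3 : exists (T H : sgraph), [/\ is_tree T, 1 < #|T| &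
      chi_mu2 T < chi_mu2 (lexprod T H)].
Proof.
exists K2, E2; split.
- split; first by rewrite card_bool.
  split.
    move=> x y; case: (eqVneq x y) => [->|hxy]; first exact: connect0.
    by apply: connect1.
  move=> k [s [hs h3 hu _]].
  have := uniq_leq_size hu (fun x _ => Ub_full x); rewrite hs /= => hk.
  by move: (leq_trans h3 hk).
- by rewrite card_bool.
- apply: leq_ltn_trans (chi_le K2_col1) (chi_gt L2_not1).
Qed.

Theorem proposition4p3 :
  (exists (G H : sgraph), [/\ mindeg_ge G 2, girth_is G 4 &
      chi_mu2 G < chi_mu2 (lexprod G H)]) /\
  (exists (G H : sgraph), [/\ mindeg_ge G 2, girth_is G 3 &
      chi_mu2 G < chi_mu2 (lexprod G H)]) /\
  (exists (T H : sgraph), [/\ is_tree T, 1 < #|T| &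
      chi_mu2 T < chi_mu2 (lexprod T H)]).
Proof. exact: (conj part1 (conj part2 part3)). Qed.
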